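(* Assume $\dim\mathcal{X}\ge2$, and let $L_0\in\mathcal{B}(\mathcal{X})$ have $\lambda_0=1$ as a simple isolated eigenvalue, with $\|L_0\|=1$ and $\|L_0x\|\le(1-\delta_0)\|x\|$ for all $x$ in the stable complement $G_0$, where $\delta_0\in(0,1)$. Let $\tau_0=\tau_{L_0}$ and $\pi_0=\pi_{L_0}$. Then for every $\delta\in(0,\delta_0)$, every $L\in\mathcal{B}(\mathcal{X})$ with \[\|L-L_0\|\le\frac{\delta_0(\delta_0-\delta)}{6(1+\delta_0-\delta)\tau_0\|\pi_0\|}\] has a spectral gap of size $\delta$ with constant $1$ below its eigenvalue $\lambda_L$ (the analytic continuation of $\lambda_0$). In particular, every $L$ with $\|L-L_0\|<\frac{\delta_0^2}{6(1+\delta_0)\tau_0\|\pi_0\|}$ has a spectral gap of some size $\delta>0$ with constant $1$ below $\lambda_L$.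
   Context: $\mathcal{X}$ is a real or complex Banach space, $\mathcal{B}(\mathcal{X})$ its bounded operators. An operator $L$ has $\lambda$ as a simple isolated eigenvalue if there are a nonzero $u$ with $Lu=\lambda u$ and a closed $L$-invariant complement $G$ of $\langle u\rangle$ (the stable complement) on which $L-\lambda$ is invertible with bounded inverse; the eigenform $\phi$ satisfies $\phi\circ L=\lambda\phi$, $\ker\phi=G$, $\phi(u)=1$. $P_L=\phi(\cdot)u$, $\pi_L=\mathrm{Id}-P_L$, $\tau_L=\|P_L\|$. A spectral gap of size $\delta\in(0,1)$ with constant $C\ge1$ below $\lambda$ means $\|L^nx\|\le C|\lambda|^n(1-\delta)^n\|x\|$ for all $x\in G$, $n\in\mathbb{N}$. *)

(* Defs.v *)
From Stdlib Require Import Reals Lra.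
Open Scope R_scope.
Set Implicit Arguments.

Record Scalars := mkScalars {
  sc_car :> Type;
  sc0 : sc_car;
  sc1 : sc_car;
  scadd : sc_car -> sc_car -> sc_car;
  scmul : sc_car -> sc_car -> sc_car;
  scopp : sc_car -> sc_car;
  scabs : sc_car -> R }.

Definition RScalars : Scalars := @mkScalars R 0 1 Rplus Rmult Ropp Rabs.

Definition Cx : Type := (R * R)%type.
Definition Cadd (z w : Cx) : Cx := (fst z + fst w, snd z + snd w).
Definition Cmul (z w : Cx) : Cx :=
  (fst z * fst w - snd z * snd w, fst z * snd w + snd z * fst w).
Definition Copp (z : Cx) : Cx := (- fst z, - snd z).
Definition Cabs (z : Cx) : R := sqrt (fst z ^ 2 + snd z ^ 2).
Definition CScalars : Scalars := @mkScalars Cx (0, 0) (1, 0) Cadd Cmul Copp Cabs.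

Inductive ScalarField := RealField | ComplexField.
Definition scalars_of (f : ScalarField) : Scalars :=
  match f with RealField => RScalars | ComplexField => CScalars end.

Record Banach (S : Scalars) := mkBanach {
  bcar :> Type;
  bzero : bcar;
  badd : bcar -> bcar -> bcar;
  bopp : bcar -> bcar;
  bscal : sc_car S -> bcar -> bcar;
  bnorm : bcar -> R;
  badd_assoc : forall x y z, badd x (badd y z) = badd (badd x y) z;
  badd_comm : forall x y, badd x y = badd y x;
  badd_0 : forall x, badd x bzero = x;
  badd_opp : forall x, badd x (bopp x) = bzero;
  bscal_1 : forall x, bscal (sc1 S) x = x;
  bscal_mul : forall a b x, bscal (scmul S a b) x = bscal a (bscal b x);
  bscal_addl : forall a b x, bscal (scadd S a b) x = badd (bscal a x) (bscal b x);
  bscal_addr : forall a x y, bscal a (badd x y) = badd (bscal a x) (bscal a y);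
  bnorm_nonneg : forall x, 0 <= bnorm x;
  bnorm_eq0 : forall x, bnorm x = 0 -> x = bzero;
  bnorm_scal : forall a x, bnorm (bscal a x) = scabs S a * bnorm x;
  bnorm_tri : forall x y, bnorm (badd x y) <= bnorm x + bnorm y;
  bcomplete : forall s : nat -> bcar,
    (forall eps, 0 < eps -> exists N, forall m n, (N <= m)%nat -> (N <= n)%nat ->
        bnorm (badd (s m) (bopp (s n))) < eps) ->
    exists l, Un_cv (fun n => bnorm (badd (s n) (bopp l))) 0 }.

Arguments bzero {S} b0.
Arguments badd {S b0}.
Arguments bopp {S b0}.
Arguments bscal {S b0}.
Arguments bnorm {S b0}.

Definition bsub {S : Scalars} {X : Banach S} (x y : X) : X := badd x (bopp y).

Definition is_linear {S : Scalars} {X : Banach S} (L : X -> X) : Prop :=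
  forall (a : sc_car S) (x y : X), L (badd (bscal a x) y) = badd (bscal a (L x)) (L y).

Definition is_bounded {S : Scalars} {X : Banach S} (L : X -> X) : Prop :=
  is_linear L /\ exists M, forall x, bnorm (L x) <= M * bnorm x.

Definition is_opnorm {S : Scalars} {X : Banach S} (L : X -> X) (c : R) : Prop :=
  is_lub (fun r => exists x : X, bnorm x <= 1 /\ r = bnorm (L x)) c.

Definition op_sub {S : Scalars} {X : Banach S} (L M : X -> X) : X -> X :=
  fun x => bsub (L x) (M x).

Definition op_pow {S : Scalars} {X : Banach S} (n : nat) (L : X -> X) : X -> X :=
  Nat.iter n L.

Definition closed_subspace {S : Scalars} {X : Banach S} (G : X -> Prop) : Prop :=
  G (bzero X) /\
  (forall a x y, G x -> G y -> G (badd (bscal a x) y)) /\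
  (forall (s : nat -> X) (l : X), (forall n, G (s n)) ->
      Un_cv (fun n => bnorm (bsub (s n) l)) 0 -> G l).

Definition line_complement {S : Scalars} {X : Banach S} (u : X) (G : X -> Prop) : Prop :=
  closed_subspace G /\
  (forall x : X, exists (a : sc_car S) (g : X), G g /\ x = badd (bscal a u) g) /\
  (forall a : sc_car S, G (bscal a u) -> bscal a u = bzero X).

Definition invariant {S : Scalars} {X : Banach S} (L : X -> X) (G : X -> Prop) : Prop :=
  forall x, G x -> G (L x).

Definition simple_isolated_eigen {S : Scalars} {X : Banach S}
  (L : X -> X) (lam : sc_car S) (u : X) (G : X -> Prop) : Prop :=
  u <> bzero X /\ L u = bscal lam u /\
  line_complement u G /\ invariant L G /\
  exists Rinv : X -> X,
    (forall g, G g -> G (Rinv g)) /\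
    (forall g, G g -> Rinv (bsub (L g) (bscal lam g)) = g /\
                      bsub (L (Rinv g)) (bscal lam (Rinv g)) = g) /\
    (exists M, forall g, G g -> bnorm (Rinv g) <= M * bnorm g).

Definition eigenform {S : Scalars} {X : Banach S}
  (L : X -> X) (lam : sc_car S) (u : X) (G : X -> Prop) (phi : X -> sc_car S) : Prop :=
  (forall a x y, phi (badd (bscal a x) y) = scadd S (scmul S a (phi x)) (phi y)) /\
  (forall x, phi (L x) = scmul S lam (phi x)) /\
  (forall x, phi x = sc0 S <-> G x) /\
  phi u = sc1 S.

Definition eig_proj {S : Scalars} {X : Banach S} (phi : X -> sc_car S) (u : X) : X -> X :=
  fun x => bscal (phi x) u.

Definition eig_coproj {S : Scalars} {X : Banach S} (phi : X -> sc_car S) (u : X) : X -> X :=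
  fun x => bsub x (eig_proj phi u x).

Definition spectral_gap {S : Scalars} {X : Banach S}
  (L : X -> X) (lam : sc_car S) (G : X -> Prop) (delta C : R) : Prop :=
  forall (x : X) (n : nat), G x ->
    bnorm (op_pow n L x) <= C * (scabs S lam) ^ n * (1 - delta) ^ n * bnorm x.

(* Main.v *)
Require Import Defs.
From Stdlib Require Import Reals Lra Lia Ring Field Psatz ClassicalEpsilon Classical.
Open Scope R_scope.

Lemma Rdiv_le_0_compat (a b : R) : 0 <= a -> 0 < b -> 0 <= a / b.
Proof. intros. unfold Rdiv. apply Rmult_le_pos; auto. left. apply Rinv_0_lt_compat; auto. Qed.



Lemma key_ineq a t e w : 0 < t < a -> a < 1 -> e * (6 * (1 + t)) = a * t -> 0 <= e -> e <= w -> w <= 7/6 * e ->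
  e * (a - 2 * w) + w * (2 - a^2 - w * (4 - 3 * a)) <= t * (1 - w) * (a - 3 * w).
Proof. intros Ht Ha He He0 Hw1 Hw2.
  assert (A1: e * (a - 2 * w) + w * (2 - a^2 - w * (4 - 3 * a)) <= e * a + w * (2 - a^2)).
  { assert (0 <= e * w) by nra. assert (0 <= w * w * (4 - 3 * a)) by (apply Rmult_le_pos; nra). nra. }
  assert (A2: t * a - t * w * (3 + a) <= t * (1 - w) * (a - 3 * w)).
  { assert (0 <= t * w * w) by (apply Rmult_le_pos; nra). nra. }
  assert (A3: e * a + w * (2 - a^2) + t * w * (3 + a) <= e * (a + 7/6 * (2 - a^2) + 7/6 * t * (3 + a))).
  { assert (0 <= 2 - a^2) by nra. assert (0 <= t * (3 + a)) by nra.
    assert (w * (2 - a^2) <= 7/6 * e * (2 - a^2)) by (apply Rmult_le_compat_r; lra).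
    assert (w * (t * (3 + a)) <= 7/6 * e * (t * (3 + a))) by (apply Rmult_le_compat_r; lra). nra. }
  assert (A4: e * (a + 7/6 * (2 - a^2) + 7/6 * t * (3 + a)) <= t * a).
  { assert (Q: a + 7/6 * (2 - a^2) + 7/6 * t * (3 + a) <= 6 * (1 + t)) by nra.
    apply Rle_trans with (e * (6 * (1 + t))). apply Rmult_le_compat_l; lra. rewrite He. lra. }
  lra. Qed.

Lemma numerics a dl : 0 < dl < a -> a < 1 ->
  let t := a - dl in let e := a * t / (6 * (1 + t)) in let K := 2 * e / a in
  let ell := 1 - e * (1 + K) in
  let r := (1 - a + e * (1 + K)) / ell in
  let sp := e * (1 + K) / (1 - r) in
  0 <= e /\ 0 <= K /\ 0 < ell /\ e + (1 - a + e) * K <= K * ell /\ r < 1 /\ sp < ell /\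
  sp + 1 - a + e <= (1 - dl) * (ell - sp).
Proof. intros Hd Ha t e K ell r sp.
  assert (Ht: 0 < t < a) by (unfold t; lra).
  assert (He: e * (6 * (1 + t)) = a * t) by (unfold e; field; lra).
  assert (He0: 0 < e) by (unfold e; apply Rdiv_lt_0_compat; nra).
  assert (HK: K * (3 * (1 + t)) = t) by (unfold K; unfold e; field; lra).
  assert (HK0: 0 < K) by (unfold K; apply Rdiv_lt_0_compat; lra).
  assert (HK1: K <= 1/6) by nra.
  set (w := e * (1 + K)) in *.
  assert (Hw1: e <= w) by (unfold w; nra).
  assert (Hw2: w <= 7/6 * e) by (unfold w; nra).
  assert (He1: e * 12 <= a) by nra.
  assert (Hw3: 3 * w < a) by nra.
  assert (Hell: ell = 1 - w) by reflexivity.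
  assert (Hl: 0 < ell) by lra.
  assert (Hr1: 1 - r = (a - 2 * w) / (1 - w)) by (unfold r; rewrite Hell; field; lra).
  assert (Hsp: sp = w * (1 - w) / (a - 2 * w)) by (unfold sp; rewrite Hr1; field; lra).
  assert (Hinv: e + (1 - a + e) * K <= K * ell).
  { assert (e * 2 = a * K) by (unfold K; field; lra). rewrite Hell. nra. }
  assert (Hrl: r < 1). { assert (0 < 1 - r). rewrite Hr1. apply Rdiv_lt_0_compat; lra. lra. }
  assert (Hsl: sp < ell).
  { rewrite Hsp, Hell. apply (Rmult_lt_reg_r (a - 2 * w)). lra. unfold Rdiv.
    rewrite Rmult_assoc, Rinv_l by lra. nra. }
  repeat split; try lra.
  pose proof (key_ineq a t e w Ht Ha He ltac:(lra) Hw1 Hw2) as KI.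
  rewrite Hsp, Hell. replace (1 - dl) with (1 - a + t) by (unfold t; ring).
  apply (Rmult_le_reg_r (a - 2 * w)). lra.
  replace ((w * (1 - w) / (a - 2 * w) + 1 - a + e) * (a - 2 * w)) with (w * (1 - w) + (1 - a + e) * (a - 2 * w))
    by (field; lra).
  replace ((1 - a + t) * (1 - w - w * (1 - w) / (a - 2 * w)) * (a - 2 * w)) with ((1 - a + t) * (1 - w) * (a - 3 * w))
    by (field; lra).
  nra. Qed.

Section Scal.
Variable S : Scalars.
Variable sinv : S -> S.
Hypothesis ft : field_theory (sc0 S) (sc1 S) (scadd S) (scmul S)
  (fun a b => scadd S a (scopp S b)) (scopp S) (fun a b => scmul S a (sinv b)) sinv eq.
Add Field SF : ft.
Hypothesis Habs_mul : forall a b, scabs S (scmul S a b) = scabs S a * scabs S b.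
Hypothesis Habs_tri : forall a b, scabs S (scadd S a b) <= scabs S a + scabs S b.
Hypothesis Habs_opp : forall a, scabs S (scopp S a) = scabs S a.
Hypothesis Habs_0 : scabs S (sc0 S) = 0.
Hypothesis Habs_1 : scabs S (sc1 S) = 1.
Hypothesis Habs_eq0 : forall a, scabs S a = 0 -> a = sc0 S.
Hypothesis Habs_nonneg : forall a, 0 <= scabs S a.
Hypothesis Habs_real : forall r, 0 <= r -> exists k, scabs S k = r.

Local Notation sadd := (scadd S).
Local Notation smul := (scmul S).
Local Notation sopp := (scopp S).
Local Notation s0 := (sc0 S).
Local Notation s1 := (sc1 S).
Local Notation sabs := (scabs S).

Lemma s1_neq0 : s1 <> s0.
Proof. exact (F_1_neq_0 ft). Qed.

Lemma sinv_r a : a <> s0 -> smul a (sinv a) = s1.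
Proof. intros H. field. exact H. Qed.

Lemma sabs_pos a : a <> s0 -> 0 < sabs a.
Proof. intros H. destruct (Habs_nonneg a) as [h|h]; auto. exfalso; apply H; auto. Qed.

Lemma sabs_inv a : a <> s0 -> sabs (sinv a) = / sabs a.
Proof. intros H. pose proof (sabs_pos a H).
  assert (E: sabs a * sabs (sinv a) = 1) by (rewrite <- Habs_mul, sinv_r; auto).
  field_simplify_eq; [lra| lra]. Qed.

Lemma sabs_sub a b : sabs (sadd a (sopp b)) = sabs (sadd b (sopp a)).
Proof. replace (sadd a (sopp b)) with (sopp (sadd b (sopp a))) by ring. apply Habs_opp. Qed.

Lemma sabs_lower a b : sabs a - sabs b <= sabs (sadd a b).
Proof. pose proof (Habs_tri (sadd a b) (sopp b)). rewrite Habs_opp in H.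
  replace (sadd (sadd a b) (sopp b)) with a in H by ring. lra. Qed.

Variable X : Banach S.
Local Notation "x +v y" := (badd x y) (at level 50, left associativity).
Local Notation "a *v x" := (bscal a x) (at level 40, no associativity).
Local Notation "x -v y" := (bsub x y) (at level 50, left associativity).
Local Notation "0v" := (bzero X).
Local Notation nrm := bnorm.

Implicit Types x y z : X.

Lemma vadd0l x : 0v +v x = x.
Proof. rewrite badd_comm. apply badd_0. Qed.

Lemma vadd_cancel x y z : x +v y = x +v z -> y = z.
Proof. intros H. rewrite <- (vadd0l y), <- (vadd0l z), <- (badd_opp _ x), (badd_comm _ x).
  rewrite <- !badd_assoc, H. reflexivity. Qed.

Lemma vscal0 x : s0 *v x = 0v.
Proof. apply (vadd_cancel (s0 *v x)). rewrite <- bscal_addl, badd_0.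
  f_equal. ring. Qed.

Lemma vscal0r a : a *v 0v = 0v.
Proof. apply (vadd_cancel (a *v 0v)). rewrite <- bscal_addr, !badd_0. reflexivity. Qed.

Lemma vopp_scal x : bopp x = (sopp s1) *v x.
Proof. apply (vadd_cancel x). rewrite badd_opp. rewrite <- (bscal_1 _ x) at 1.
  rewrite <- bscal_addl. replace (sadd s1 (sopp s1)) with s0 by ring. rewrite vscal0. reflexivity. Qed.

Lemma vsub_scal x y : x -v y = x +v (sopp s1) *v y.
Proof. unfold bsub. rewrite vopp_scal. reflexivity. Qed.

Lemma vscal_opp a x : a *v bopp x = (sopp a) *v x.
Proof. rewrite vopp_scal, <- bscal_mul. f_equal. ring. Qed.

Lemma vopp_opp x : bopp (bopp x) = x.
Proof. rewrite !vopp_scal, <- bscal_mul. replace (smul (sopp s1) (sopp s1)) with s1 by ring.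
  apply bscal_1. Qed.

Lemma vsubv x : x -v x = 0v.
Proof. apply badd_opp. Qed.

Lemma vsub0 x : x -v 0v = x.
Proof. unfold bsub. rewrite vopp_scal, vscal0r, badd_0. reflexivity. Qed.

Lemma vsub_add x y : (x -v y) +v y = x.
Proof. unfold bsub. rewrite <- badd_assoc, (badd_comm _ (bopp y)), badd_opp, badd_0. reflexivity. Qed.

Lemma vadd_sub x y : (x +v y) -v y = x.
Proof. unfold bsub. rewrite <- badd_assoc, badd_opp, badd_0. reflexivity. Qed.

Lemma vadd_sub_l x y : (x +v y) -v x = y.
Proof. rewrite badd_comm. apply vadd_sub. Qed.

Lemma vsub_eq0 x y : x -v y = 0v -> x = y.
Proof. intros H. rewrite <- (vsub_add x y), H. apply vadd0l. Qed.

Lemma vnorm0 : nrm 0v = 0.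
Proof. rewrite <- (vscal0 0v), bnorm_scal, Habs_0. ring. Qed.

Lemma vnorm_opp x : nrm (bopp x) = nrm x.
Proof. rewrite vopp_scal, bnorm_scal, Habs_opp, Habs_1. ring. Qed.

Lemma vsub_opp x y : bopp (x -v y) = y -v x.
Proof. rewrite vopp_scal, !vsub_scal, bscal_addr, <- bscal_mul, badd_comm.
  replace (smul (sopp s1) (sopp s1)) with s1 by ring. rewrite bscal_1. reflexivity. Qed.

Lemma vnorm_sub_sym x y : nrm (x -v y) = nrm (y -v x).
Proof. rewrite <- vsub_opp, vnorm_opp. reflexivity. Qed.

Lemma vnorm_sub_tri x y z : nrm (x -v z) <= nrm (x -v y) + nrm (y -v z).
Proof. replace (x -v z) with ((x -v y) +v (y -v z)). apply bnorm_tri.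
  unfold bsub. rewrite <- badd_assoc, (badd_assoc _ (bopp y)), (badd_comm _ (bopp y)), badd_opp, vadd0l.
  reflexivity. Qed.

Lemma vnorm_sub_le x y : nrm (x -v y) <= nrm x + nrm y.
Proof. unfold bsub. rewrite <- (vnorm_opp y). apply bnorm_tri. Qed.

Lemma vnorm_rev x y : nrm x - nrm y <= nrm (x -v y).
Proof. pose proof (bnorm_tri _ (x -v y) y). rewrite vsub_add in H. lra. Qed.

Lemma vnorm_rev_add x y : nrm x - nrm y <= nrm (x +v y).
Proof. pose proof (vnorm_rev x (bopp y)). rewrite vnorm_opp in H. unfold bsub in H.
  rewrite vopp_opp in H. exact H. Qed.

Lemma vscal_sub a x y : a *v (x -v y) = a *v x -v a *v y.
Proof. unfold bsub. rewrite bscal_addr, !vscal_opp, vopp_scal, <- bscal_mul.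
  f_equal. f_equal. ring. Qed.

Lemma vscal_subl a b x : (sadd a (sopp b)) *v x = a *v x -v b *v x.
Proof. rewrite bscal_addl. unfold bsub. rewrite vopp_scal, <- bscal_mul. f_equal. f_equal. ring. Qed.

Lemma vadd_sub_assoc x y z : x +v (y -v z) = (x +v y) -v z.
Proof. unfold bsub. apply badd_assoc. Qed.



Section Lin.
Variable T : X -> X.
Hypothesis HT : is_linear T.
Lemma lin_add x y : T (x +v y) = T x +v T y.
Proof. rewrite <- (bscal_1 _ x) at 1. rewrite HT, bscal_1. reflexivity. Qed.
Lemma lin_0 : T 0v = 0v.
Proof. apply (vadd_cancel (T 0v)). rewrite <- lin_add, !badd_0. reflexivity. Qed.
Lemma lin_scal a x : T (a *v x) = a *v T x.
Proof. rewrite <- (badd_0 _ (a *v x)), HT, lin_0, badd_0. reflexivity. Qed.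
Lemma lin_opp x : T (bopp x) = bopp (T x).
Proof. rewrite !vopp_scal, lin_scal. reflexivity. Qed.
Lemma lin_sub x y : T (x -v y) = T x -v T y.
Proof. unfold bsub. rewrite lin_add, lin_opp. reflexivity. Qed.
End Lin.

Section LinF.
Variable f : X -> S.
Hypothesis Hf : forall a x y, f (badd (bscal a x) y) = sadd (smul a (f x)) (f y).
Lemma flin_add x y : f (x +v y) = sadd (f x) (f y).
Proof. rewrite <- (bscal_1 _ x) at 1. rewrite Hf. ring. Qed.
Lemma flin_0 : f 0v = s0.
Proof. pose proof (flin_add 0v 0v) as H. rewrite badd_0 in H.
  assert (E: sadd (f 0v) (sopp (f 0v)) = sadd (sadd (f 0v) (f 0v)) (sopp (f 0v))) by (rewrite <- H; reflexivity).
  replace s0 with (sadd (f 0v) (sopp (f 0v))) by ring. rewrite E. ring. Qed.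
Lemma flin_scal a x : f (a *v x) = smul a (f x).
Proof. rewrite <- (badd_0 _ (a *v x)), Hf, flin_0. ring. Qed.
Lemma flin_sub x y : f (x -v y) = sadd (f x) (sopp (f y)).
Proof. unfold bsub. rewrite flin_add, vopp_scal, flin_scal. ring. Qed.
End LinF.


Definition conv (s : nat -> X) (l : X) := Un_cv (fun n => nrm (s n -v l)) 0.

Lemma Rle_eps (A B : R) : (forall eps, 0 < eps -> A <= B + eps) -> A <= B.
Proof. intros H. destruct (Rle_dec A B) as [h|h]; auto. exfalso.
  specialize (H ((A - B)/2)). lra. Qed.

Lemma conv_get s l : conv s l -> forall eps, 0 < eps -> exists N, forall n, (n >= N)%nat -> nrm (s n -v l) < eps.
Proof. intros H eps He. destruct (H eps He) as [N HN]. exists N. intros n Hn.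
  specialize (HN n Hn). unfold Rdist in HN. rewrite Rminus_0_r, Rabs_pos_eq in HN; auto. apply bnorm_nonneg. Qed.

Lemma conv_mk s l : (forall eps, 0 < eps -> exists N, forall n, (n >= N)%nat -> nrm (s n -v l) < eps) -> conv s l.
Proof. intros H eps He. destruct (H eps He) as [N HN]. exists N. intros n Hn.
  unfold Rdist. rewrite Rminus_0_r, Rabs_pos_eq; auto. apply bnorm_nonneg. Qed.

Lemma conv_unique s l1 l2 : conv s l1 -> conv s l2 -> l1 = l2.
Proof. intros H1 H2. apply vsub_eq0, bnorm_eq0. apply Rle_antisym; [|apply bnorm_nonneg].
  apply Rle_eps. intros eps He.
  destruct (conv_get _ _ H1 (eps/2)) as [N1 HN1]; [lra|].
  destruct (conv_get _ _ H2 (eps/2)) as [N2 HN2]; [lra|].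
  specialize (HN1 (N1+N2)%nat ltac:(lia)). specialize (HN2 (N1+N2)%nat ltac:(lia)).
  pose proof (vnorm_sub_tri l1 (s (N1+N2)%nat) l2). rewrite (vnorm_sub_sym l1 (s (N1+N2)%nat)) in H. lra. Qed.

Lemma conv_shift s l : conv s l -> conv (fun n => s (Datatypes.S n)) l.
Proof. intros H. apply conv_mk. intros eps He. destruct (conv_get _ _ H eps He) as [N HN].
  exists N. intros n Hn. apply HN. lia. Qed.

Lemma conv_lip (T : X -> X) k s l : 0 <= k -> conv s l ->
  (forall n, nrm (T (s n) -v T l) <= k * nrm (s n -v l)) -> conv (fun n => T (s n)) (T l).
Proof. intros Hk H HT. apply conv_mk. intros eps He.
  destruct (conv_get _ _ H (eps/(k+1))) as [N HN]. apply Rdiv_lt_0_compat; lra.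
  exists N. intros n Hn. specialize (HN n Hn). specialize (HT n).
  apply Rle_lt_trans with (k * nrm (s n -v l)); auto.
  apply Rle_lt_trans with (k * (eps/(k+1))). apply Rmult_le_compat_l; lra.
  apply Rlt_le_trans with ((k+1) * (eps/(k+1))). apply Rmult_lt_compat_r. apply Rdiv_lt_0_compat; lra. lra.
  right. field. lra. Qed.

Lemma conv_norm_le s l B : conv s l -> (forall n, nrm (s n) <= B) -> nrm l <= B.
Proof. intros H HB. apply Rle_eps. intros eps He.
  destruct (conv_get _ _ H eps He) as [N HN]. specialize (HN N ltac:(lia)).
  pose proof (vnorm_rev l (s N)) as A. rewrite (vnorm_sub_sym l) in A. pose proof (HB N). lra. Qed.

Lemma conv_const x : conv (fun _ => x) x.
Proof. apply conv_mk. intros eps He. exists O. intros. rewrite vsubv, vnorm0. auto. Qed.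

Lemma conv_zero_norm s : conv s 0v -> Un_cv (fun n => nrm (s n)) 0.
Proof. intros H eps He. destruct (conv_get _ _ H eps He) as [N HN]. exists N. intros n Hn.
  specialize (HN n Hn). rewrite vsub0 in HN. unfold Rdist. rewrite Rminus_0_r, Rabs_pos_eq; auto.
  apply bnorm_nonneg. Qed.

Lemma pow_decr q n k : 0 <= q <= 1 -> q ^ (n + k) <= q ^ n.
Proof. intros Hq. rewrite pow_add. rewrite <- (Rmult_1_r (q^n)) at 2.
  apply Rmult_le_compat_l. apply pow_le; lra.
  induction k; simpl; [lra|]. replace 1 with (1*1) by ring. apply Rmult_le_compat; try lra.
  apply pow_le; lra. Qed.

Lemma geo_conv (s : nat -> X) C q : 0 <= C -> 0 <= q < 1 ->
  (forall n, nrm (s (Datatypes.S n) -v s n) <= C * q ^ n) -> exists l, conv s l.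
Proof. intros HC Hq H.
  assert (Hp: forall n m, nrm (s (n+m)%nat -v s n) <= C * (q^n - q^(n+m)) / (1-q)).
  { intros n m. induction m.
    - rewrite Nat.add_0_r, vsubv, vnorm0. unfold Rdiv. rewrite Rminus_diag_eq; auto. lra.
    - rewrite Nat.add_succ_r. eapply Rle_trans. apply (vnorm_sub_tri _ (s (n+m)%nat)).
      eapply Rle_trans. apply Rplus_le_compat. apply H. apply IHm.
      right. simpl. field. lra. }
  assert (Hq2: forall n m, (n <= m)%nat -> nrm (s m -v s n) <= C * q^n / (1-q)).
  { intros n m Hnm. replace m with (n + (m-n))%nat by lia. eapply Rle_trans. apply Hp.
    unfold Rdiv. apply Rmult_le_compat_r. left; apply Rinv_0_lt_compat; lra.
    apply Rmult_le_compat_l; auto. pose proof (pow_le q (n + (m-n)) ltac:(lra)). lra. }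
  destruct (bcomplete _ s) as [l Hl].
  { intros eps He.
    destruct (pow_lt_1_zero q ltac:(rewrite Rabs_pos_eq; lra) (eps * (1-q) / (C+1))) as [N HN].
    { apply Rdiv_lt_0_compat; [apply Rmult_lt_0_compat|]; lra. }
    exists N. intros m n Hm Hn.
    assert (Hk: forall a b, (N <= a)%nat -> (a <= b)%nat -> nrm (s b -v s a) < eps).
    { intros a b Ha Hab. eapply Rle_lt_trans. apply Hq2; auto.
      specialize (HN a Ha). rewrite Rabs_pos_eq in HN by (apply pow_le; lra).
      apply Rle_lt_trans with ((C+1) * q^a / (1-q)).
      unfold Rdiv. apply Rmult_le_compat_r. left; apply Rinv_0_lt_compat; lra.
      apply Rmult_le_compat_r. apply pow_le; lra. lra.
      apply Rlt_le_trans with ((C+1) * (eps * (1-q) / (C+1)) / (1-q)).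
      unfold Rdiv. apply Rmult_lt_compat_r. apply Rinv_0_lt_compat; lra.
      apply Rmult_lt_compat_l; lra. right. field. lra. }
    destruct (Compare_dec.le_lt_dec n m).
    - change (badd (s m) (bopp (s n))) with (s m -v s n). apply Hk; auto.
    - change (badd (s m) (bopp (s n))) with (s m -v s n). rewrite vnorm_sub_sym. apply Hk; auto. lia. }
  exists l. exact Hl. Qed.

Definition closed_set (P : X -> Prop) := forall s l, (forall n, P (s n)) -> conv s l -> P l.

Lemma fixed_point (P : X -> Prop) (T : X -> X) k x0 : closed_set P -> P x0 ->
  (forall x, P x -> P (T x)) -> 0 <= k < 1 ->
  (forall x y, P x -> P y -> nrm (T x -v T y) <= k * nrm (x -v y)) ->
  exists x, P x /\ T x = x.
Proof. intros HP Hx0 HT Hk HL.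
  set (s := fun n => Nat.iter n T x0).
  assert (Hs: forall n, P (s n)). { induction n; simpl; auto. }
  assert (Hstep: forall n, nrm (s (Datatypes.S n) -v s n) <= nrm (s 1%nat -v s O) * k ^ n).
  { induction n. simpl. lra.
    eapply Rle_trans. apply (HL (s (Datatypes.S n)) (s n)); auto.
    replace (nrm (s 1%nat -v s 0%nat) * k ^ Datatypes.S n) with (k * (nrm (s 1%nat -v s O) * k ^ n)) by (simpl; ring).
    apply Rmult_le_compat_l; lra. }
  destruct (geo_conv s (nrm (s 1%nat -v s O)) k (bnorm_nonneg _ _) Hk Hstep) as [l Hl].
  exists l. split. apply (HP s l Hs Hl).
  assert (H1: conv (fun n => T (s n)) (T l)).
  { apply conv_lip with k; [lra|auto|]. intros n. apply HL; auto. apply (HP s l Hs Hl). }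
  apply (conv_unique (fun n => T (s n))); auto. apply (conv_shift s l Hl). Qed.


Lemma vadd_swap x y z w : (x +v y) +v (z +v w) = (x +v z) +v (y +v w).
Proof. rewrite (badd_assoc _ (x +v y) z w), <- (badd_assoc _ x y z), (badd_comm _ y z),
  (badd_assoc _ x z y), <- (badd_assoc _ (x +v z) y w). reflexivity. Qed.

Lemma vopp_add x y : bopp (x +v y) = bopp x +v bopp y.
Proof. rewrite !vopp_scal. apply bscal_addr. Qed.

Lemma vsub_add_distr x y z w : (x +v y) -v (z +v w) = (x -v z) +v (y -v w).
Proof. unfold bsub. rewrite vopp_add, vadd_swap. reflexivity. Qed.

Lemma vadd_sub_cancel_r x y z : (x +v z) -v (y +v z) = x -v y.
Proof. rewrite vsub_add_distr, vsubv, badd_0. reflexivity. Qed.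

Lemma vsub_sub_r x y z : (x -v z) -v (y -v z) = x -v y.
Proof. pose proof (vadd_sub_cancel_r x y (bopp z)) as H. unfold bsub in *. exact H. Qed.

Lemma vadd_sub_r x y z : (x +v y) -v z = x +v (y -v z).
Proof. unfold bsub. rewrite badd_assoc. reflexivity. Qed.

Lemma vscal_combo a b x y : a *v x -v b *v y = a *v (x -v y) +v (sadd a (sopp b)) *v y.
Proof. rewrite vscal_sub, vscal_subl. unfold bsub. rewrite <- badd_assoc. f_equal.
  rewrite badd_assoc, (badd_comm _ (bopp _) (a *v y)), badd_opp, vadd0l. reflexivity. Qed.

Lemma vnorm_add_le x y : nrm (x +v y) <= nrm x + nrm y.
Proof. apply bnorm_tri. Qed.

Lemma vsub_vadd x y : x = y +v (x -v y).
Proof. rewrite badd_comm. symmetry. apply vsub_add. Qed.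

Lemma vscal_inv_eq lam x y : lam <> s0 -> (sinv lam) *v x = y -> x = lam *v y.
Proof. intros Hl H. rewrite <- H, <- bscal_mul. rewrite sinv_r; auto. symmetry. apply bscal_1. Qed.

Lemma vscal_s1 x : s1 *v x = x.
Proof. apply bscal_1. Qed.



Lemma conv_add s t l1 l2 : conv s l1 -> conv t l2 -> conv (fun n => s n +v t n) (l1 +v l2).
Proof. intros H1 H2. apply conv_mk. intros eps Heps.
  destruct (conv_get _ _ H1 (eps/2)) as [N1 HN1]; [lra|].
  destruct (conv_get _ _ H2 (eps/2)) as [N2 HN2]; [lra|].
  exists (N1 + N2)%nat. intros n Hn. rewrite vsub_add_distr. eapply Rle_lt_trans. apply bnorm_tri.
  specialize (HN1 n ltac:(lia)). specialize (HN2 n ltac:(lia)). lra. Qed.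

Lemma conv_ext s t l : (forall n, s n = t n) -> conv s l -> conv t l.
Proof. intros He H. apply conv_mk. intros eps Heps. destruct (conv_get _ _ H eps Heps) as [N HN].
  exists N. intros n Hn. rewrite <- He. auto. Qed.

Lemma conv_scal b s l : conv s l -> conv (fun n => b *v s n) (b *v l).
Proof. intros H. apply (conv_lip (bscal b) (sabs b)); auto. intros n. rewrite <- vscal_sub, bnorm_scal. lra. Qed.

Lemma conv_geo0 s C q : 0 <= q < 1 -> (forall n, nrm (s n) <= C * q ^ n) -> conv s 0v.
Proof. intros Hq H. apply conv_mk. intros eps Heps.
  destruct (pow_lt_1_zero q ltac:(rewrite Rabs_pos_eq; lra) (eps / (Rabs C + 1))) as [N HN].
  { apply Rdiv_lt_0_compat; [lra|]. pose proof (Rabs_pos C). lra. }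
  exists N. intros n Hn. rewrite vsub0. specialize (HN n Hn). specialize (H n).
  rewrite Rabs_pos_eq in HN by (apply pow_le; lra).
  pose proof (Rabs_pos C). pose proof (Rle_abs C). pose proof (pow_le q n ltac:(lra)).
  apply Rle_lt_trans with ((Rabs C + 1) * q ^ n). nra.
  apply Rlt_le_trans with ((Rabs C + 1) * (eps / (Rabs C + 1))). apply Rmult_lt_compat_l; lra.
  right. field. lra. Qed.

Section Main.
Variables (L0 L : X -> X) (u0 : X) (G0 : X -> Prop) (phi0 : X -> S).
Hypothesis HL0 : is_linear L0.
Hypothesis HL : is_linear L.
Hypothesis HG0 : closed_subspace G0.
Hypothesis Hphi : forall a x y, phi0 (a *v x +v y) = sadd (smul a (phi0 x)) (phi0 y).
Hypothesis HphiL : forall x, phi0 (L0 x) = phi0 x.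
Hypothesis Hker : forall x, phi0 x = s0 <-> G0 x.
Hypothesis Hphiu : phi0 u0 = s1.
Hypothesis HL0u : L0 u0 = u0.
Variables (a dl tau p c e K : R).
Hypothesis Hcontr : forall x, G0 x -> nrm (L0 x) <= (1 - a) * nrm x.
Hypothesis Htau : forall x, nrm ((phi0 x) *v u0) <= tau * nrm x.
Hypothesis Hpi : forall x, nrm (x -v (phi0 x) *v u0) <= p * nrm x.
Hypothesis HE : forall x, nrm (L x -v L0 x) <= c * nrm x.
Hypothesis Hnu : 0 < nrm u0.
Hypothesis Ha : 0 < a < 1.
Hypothesis Hdl : 0 < dl < 1.
Hypothesis Hc : 0 <= c.
Hypothesis Htau0 : 0 <= tau.
Hypothesis Hp0 : 0 <= p.
Hypothesis Htc : tau * c <= e.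
Hypothesis Hpc : p * c <= e.
Hypothesis Hce : c <= e.
Hypothesis HK : 0 <= K.
Hypothesis He : 0 <= e.
Let ell := 1 - e * (1 + K).
Let r := (1 - a + e * (1 + K)) / ell.
Let sp := e * (1 + K) / (1 - r).
Hypothesis Hl : 0 < ell.
Hypothesis Hinvb : e + (1 - a + e) * K <= K * ell.
Hypothesis Hr : r < 1.
Hypothesis Hfin1 : sp < ell.
Hypothesis Hfin2 : sp + 1 - a + e <= (1 - dl) * (ell - sp).

Let nu := nrm u0.
Definition pi0 x := x -v (phi0 x) *v u0.
Definition E x := L x -v L0 x.

Lemma phi_add x y : phi0 (x +v y) = sadd (phi0 x) (phi0 y).
Proof. apply flin_add; auto. Qed.
Lemma phi_scal b x : phi0 (b *v x) = smul b (phi0 x).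
Proof. apply flin_scal; auto. Qed.
Lemma phi_sub x y : phi0 (x -v y) = sadd (phi0 x) (sopp (phi0 y)).
Proof. apply flin_sub; auto. Qed.
Lemma phi_0 : phi0 0v = s0.
Proof. apply flin_0; auto. Qed.

Lemma E_lin : is_linear E.
Proof. intros b x y. unfold E. rewrite HL, HL0. rewrite vsub_add_distr, vscal_sub. reflexivity. Qed.

Lemma pi0_lin : is_linear pi0.
Proof. intros b x y. unfold pi0. rewrite Hphi, bscal_addl, bscal_mul, vsub_add_distr, vscal_sub.
  reflexivity. Qed.

Lemma L_split x : L x = L0 x +v E x.
Proof. unfold E. rewrite badd_comm. symmetry. apply vsub_add. Qed.

Lemma G0_phi x : G0 x -> phi0 x = s0.
Proof. apply Hker. Qed.

Lemma G0_pi x : G0 (pi0 x).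
Proof. apply Hker. unfold pi0. rewrite phi_sub, phi_scal, Hphiu. ring. Qed.

Lemma phi_pi x : phi0 (pi0 x) = s0.
Proof. apply Hker, G0_pi. Qed.

Lemma pi_G0 x : G0 x -> pi0 x = x.
Proof. intros H. unfold pi0. rewrite G0_phi, vscal0, vsub0; auto. Qed.

Lemma phi_bound x : sabs (phi0 x) * nu <= tau * nrm x.
Proof. unfold nu. rewrite <- bnorm_scal. apply Htau. Qed.

Lemma phi_bound' x : sabs (phi0 x) <= tau / nu * nrm x.
Proof. pose proof (phi_bound x). unfold nu in *. apply (Rmult_le_reg_r (nrm u0)); auto.
  replace (tau / nrm u0 * nrm x * nrm u0) with (tau * nrm x) by (field; lra). auto. Qed.

Lemma E_bound x : nrm (E x) <= c * nrm x.
Proof. apply HE. Qed.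

Lemma phiE_bound x : sabs (phi0 (E x)) * nu <= e * nrm x.
Proof. eapply Rle_trans. apply phi_bound. pose proof (E_bound x). pose proof (bnorm_nonneg _ x).
  apply Rle_trans with (tau * (c * nrm x)). apply Rmult_le_compat_l; auto.
  rewrite <- Rmult_assoc. apply Rmult_le_compat_r; auto. Qed.

Lemma piE_bound x : nrm (pi0 (E x)) <= e * nrm x.
Proof. eapply Rle_trans. apply Hpi. pose proof (E_bound x). pose proof (bnorm_nonneg _ x).
  apply Rle_trans with (p * (c * nrm x)). apply Rmult_le_compat_l; auto.
  rewrite <- Rmult_assoc. apply Rmult_le_compat_r; auto. Qed.

Lemma phi_L_G0 y : G0 y -> phi0 (L y) = phi0 (E y).
Proof. intros H. rewrite L_split, phi_add, HphiL, G0_phi; auto. ring. Qed.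

Lemma pi_L_G0 y : G0 y -> pi0 (L y) = L0 y +v pi0 (E y).
Proof. intros H. unfold pi0 at 1. rewrite phi_L_G0; auto. rewrite L_split. unfold pi0.
  apply vadd_sub_r. Qed.

Lemma G0_L0 y : G0 y -> G0 (L0 y).
Proof. intros H. apply Hker. rewrite HphiL. apply Hker; auto. Qed.

Lemma pi_L_G0_bound y : G0 y -> nrm (pi0 (L y)) <= (1 - a + e) * nrm y.
Proof. intros H. rewrite pi_L_G0; auto. eapply Rle_trans. apply bnorm_tri.
  pose proof (Hcontr y H). pose proof (piE_bound y). lra. Qed.

Lemma phi_L_u0 : phi0 (L u0) = sadd s1 (phi0 (E u0)).
Proof. rewrite L_split, phi_add, HphiL, Hphiu. reflexivity. Qed.

Lemma pi_L_u0 : pi0 (L u0) = pi0 (E u0).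
Proof. unfold pi0. rewrite phi_L_u0, bscal_addl, vscal_s1, (L_split u0), HL0u.
  rewrite (badd_comm _ u0 (E u0)), (badd_comm _ u0 (_ *v u0)). apply vadd_sub_cancel_r. Qed.

Lemma pi_lin_add x y : pi0 (x +v y) = pi0 x +v pi0 y.
Proof. apply lin_add, pi0_lin. Qed.
Lemma pi_lin_sub x y : pi0 (x -v y) = pi0 x -v pi0 y.
Proof. apply lin_sub, pi0_lin. Qed.
Lemma L_sub x y : L (x -v y) = L x -v L y.
Proof. apply lin_sub; auto. Qed.
Lemma L_add x y : L (x +v y) = L x +v L y.
Proof. apply lin_add; auto. Qed.
Lemma L_scal b x : L (b *v x) = b *v L x.
Proof. apply lin_scal; auto. Qed.

Lemma G0_sub x y : G0 x -> G0 y -> G0 (x -v y).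
Proof. intros Hx Hy. apply Hker. rewrite phi_sub, !G0_phi; auto. ring. Qed.
Lemma G0_add x y : G0 x -> G0 y -> G0 (x +v y).
Proof. intros Hx Hy. apply Hker. rewrite phi_add, !G0_phi; auto. ring. Qed.
Lemma G0_scal b x : G0 x -> G0 (b *v x).
Proof. intros Hx. apply Hker. rewrite phi_scal, !G0_phi; auto. ring. Qed.
Lemma G0_0 : G0 0v.
Proof. apply Hker, phi_0. Qed.



Lemma vadd_sub_cancel_l x y z : (z +v x) -v (z +v y) = x -v y.
Proof. rewrite (badd_comm _ z x), (badd_comm _ z y). apply vadd_sub_cancel_r. Qed.

Lemma Ha_e : 0 <= 1 - a + e.
Proof. lra. Qed.

Definition Lam h := phi0 (L (u0 +v h)).
Definition Nv h := pi0 (L (u0 +v h)).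
Definition Tm h := sinv (Lam h) *v Nv h.
Definition Pb h := G0 h /\ nrm h <= K * nu.

Lemma Lam_G0 h : G0 h -> Lam h = sadd s1 (phi0 (E (u0 +v h))).
Proof. intros H. unfold Lam. rewrite L_add, phi_add, phi_L_u0, phi_L_G0; auto.
  rewrite (lin_add E E_lin), phi_add. ring. Qed.

Lemma u0h_norm h : Pb h -> nrm (u0 +v h) <= (1 + K) * nu.
Proof. intros [H1 H2]. eapply Rle_trans. apply bnorm_tri. unfold nu in *. lra. Qed.

Lemma phiE_w h : Pb h -> sabs (phi0 (E (u0 +v h))) <= e * (1 + K).
Proof. intros H. pose proof (phiE_bound (u0 +v h)). pose proof (u0h_norm h H).
  apply (Rmult_le_reg_r nu). exact Hnu.
  eapply Rle_trans. exact H0. rewrite Rmult_assoc. apply Rmult_le_compat_l; auto. Qed.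

Lemma Lam_bound h : Pb h -> ell <= sabs (Lam h).
Proof. intros H. rewrite Lam_G0 by apply H. pose proof (sabs_lower s1 (phi0 (E (u0 +v h)))).
  rewrite Habs_1 in H0. pose proof (phiE_w h H). unfold ell. lra. Qed.

Lemma Lam_neq0 h : Pb h -> Lam h <> s0.
Proof. intros H E0. pose proof (Lam_bound h H). rewrite E0, Habs_0 in H0. lra. Qed.

Lemma Lam_diff h1 h2 : G0 h1 -> G0 h2 ->
  sabs (sadd (Lam h1) (sopp (Lam h2))) * nu <= e * nrm (h1 -v h2).
Proof. intros H1 H2. unfold Lam. rewrite <- phi_sub, <- L_sub, vadd_sub_cancel_l.
  rewrite phi_L_G0 by (apply G0_sub; auto). apply phiE_bound. Qed.

Lemma Nv_decomp h : Nv h = pi0 (E u0) +v pi0 (L h).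
Proof. unfold Nv. rewrite L_add, pi_lin_add, pi_L_u0. reflexivity. Qed.

Lemma Nv_bound h : Pb h -> nrm (Nv h) <= (e + (1 - a + e) * K) * nu.
Proof. intros [H1 H2]. rewrite Nv_decomp. eapply Rle_trans. apply bnorm_tri.
  pose proof (piE_bound u0). pose proof (pi_L_G0_bound h H1). pose proof Ha_e.
  assert ((1 - a + e) * nrm h <= (1 - a + e) * (K * nu)) by (apply Rmult_le_compat_l; auto).
  unfold nu in *. nra. Qed.

Lemma Nv_diff h1 h2 : G0 h1 -> G0 h2 -> nrm (Nv h1 -v Nv h2) <= (1 - a + e) * nrm (h1 -v h2).
Proof. intros H1 H2. unfold Nv. rewrite <- pi_lin_sub, <- L_sub, vadd_sub_cancel_l.
  apply pi_L_G0_bound. apply G0_sub; auto. Qed.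

Lemma Tm_G0 h : G0 (Tm h).
Proof. apply Hker. unfold Tm. rewrite phi_scal. unfold Nv. rewrite phi_pi. ring. Qed.

Lemma Tm_bound h : Pb h -> nrm (Tm h) <= K * nu.
Proof. intros H. unfold Tm. rewrite bnorm_scal, sabs_inv by (apply Lam_neq0; auto).
  pose proof (Lam_bound h H). pose proof (Nv_bound h H).
  assert (0 <= nrm (Nv h)) by apply bnorm_nonneg.
  apply Rle_trans with (/ ell * nrm (Nv h)).
  - apply Rmult_le_compat_r; auto. apply Rinv_le_contravar; auto.
  - apply Rle_trans with (/ ell * (K * ell * nu)).
    + apply Rmult_le_compat_l. left; apply Rinv_0_lt_compat; auto.
      eapply Rle_trans. exact H1. apply Rmult_le_compat_r. unfold nu; lra. lra.
    + right. field. lra. Qed.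

Lemma Tm_lip h1 h2 : Pb h1 -> Pb h2 -> nrm (Tm h1 -v Tm h2) <= r * nrm (h1 -v h2).
Proof. intros P1 P2. unfold Tm. rewrite vscal_combo.
  pose proof (Lam_neq0 h1 P1) as N1. pose proof (Lam_neq0 h2 P2) as N2.
  pose proof (Lam_bound h1 P1) as B1. pose proof (Lam_bound h2 P2) as B2.
  set (l1 := Lam h1) in *. set (l2 := Lam h2) in *.
  assert (Ei: sadd (sinv l1) (sopp (sinv l2)) = smul (smul (sinv l1) (sinv l2)) (sadd l2 (sopp l1))).
  { field. auto. }
  rewrite Ei. eapply Rle_trans. apply bnorm_tri. rewrite !bnorm_scal, !Habs_mul, !sabs_inv by auto.
  pose proof (Nv_diff h1 h2 (proj1 P1) (proj1 P2)).
  pose proof (Lam_diff h2 h1 (proj1 P2) (proj1 P1)). fold l1 l2 in H0.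
  rewrite (vnorm_sub_sym h2 h1) in H0.
  pose proof (Nv_bound h2 P2). pose proof Ha_e.
  set (d := nrm (h1 -v h2)) in *. set (A := sabs (sadd l2 (sopp l1))) in *.
  set (n2 := nrm (Nv h2)) in *. set (n12 := nrm (Nv h1 -v Nv h2)) in *.
  assert (Hd: 0 <= d) by apply bnorm_nonneg.
  assert (HA: A <= e * d / nu). { apply (Rmult_le_reg_r nu). unfold nu; auto.
    replace (e * d / nu * nu) with (e * d) by (field; unfold nu; lra). exact H0. }
  assert (Hn2: n2 <= K * ell * nu). { eapply Rle_trans. exact H1. apply Rmult_le_compat_r. unfold nu; lra. lra. }
  assert (Hi1: / sabs l1 <= / ell) by (apply Rinv_le_contravar; lra).
  assert (Hi2: / sabs l2 <= / ell) by (apply Rinv_le_contravar; lra).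
  assert (Hi1p: 0 < / sabs l1) by (apply Rinv_0_lt_compat; lra).
  assert (Hi2p: 0 < / sabs l2) by (apply Rinv_0_lt_compat; lra).
  assert (T1: / sabs l1 * n12 <= / ell * ((1 - a + e) * d)).
  { apply Rmult_le_compat; auto; try lra. apply bnorm_nonneg. }
  assert (T2: / sabs l1 * / sabs l2 * A * n2 <= / ell * / ell * (e * d / nu) * (K * ell * nu)).
  { assert (0 <= A) by apply Habs_nonneg. assert (0 <= n2) by apply bnorm_nonneg.
    apply Rmult_le_compat; [apply Rmult_le_pos; [apply Rmult_le_pos; lra| lra] | lra | | exact Hn2].
    apply Rmult_le_compat; [apply Rmult_le_pos; lra | lra | apply Rmult_le_compat; lra | exact HA]. }
  replace (/ ell * / ell * (e * d / nu) * (K * ell * nu)) with (/ ell * (e * K * d)) in T2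
    by (field; unfold nu in *; lra).
  unfold r. unfold Rdiv. 
  replace ((1 - a + e * (1 + K)) * / ell * d) with (/ ell * ((1 - a + e) * d) + / ell * (e * K * d)) by ring.
  lra. Qed.

Lemma Pb_closed : closed_set Pb.
Proof. intros s0' l Hs Hlim. split.
  - destruct HG0 as [_ [_ Hc']]. apply (Hc' s0'); auto. intros n; apply Hs.
  - apply (conv_norm_le s0'); auto. intros n; apply Hs. Qed.

Lemma eigen_exists : exists h, Pb h /\
  L (u0 +v h) = (Lam h) *v (u0 +v h).
Proof.
  assert (Hr0: 0 <= r). { unfold r. apply Rmult_le_pos. assert (0 <= e*(1+K)) by (apply Rmult_le_pos; lra). lra. left. apply Rinv_0_lt_compat. lra. }
  destruct (fixed_point Pb Tm r 0v Pb_closed) as [h [Hh Hfix]].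
  - split. apply G0_0. rewrite vnorm0. apply Rmult_le_pos; auto. unfold nu; lra.
  - intros x Hx. split. apply Tm_G0. apply Tm_bound; auto.
  - lra.
  - intros x y Hx Hy. apply Tm_lip; auto.
  - exists h. split; auto.
    unfold Tm in Hfix. apply vscal_inv_eq in Hfix; [|apply Lam_neq0; auto].
    unfold Nv, pi0 in Hfix. fold (Lam h) in Hfix.
    rewrite (vsub_vadd (L (u0 +v h)) (Lam h *v u0)), Hfix, bscal_addr, badd_comm. reflexivity. Qed.


Lemma vsub_add_r' x y z : x -v (y +v z) = (x -v y) -v z.
Proof. unfold bsub. rewrite vopp_add, badd_assoc. reflexivity. Qed.

Section Eig.
Variables (h : X) (lam : S).
Hypothesis Hh : Pb h.
Hypothesis Hlb : ell <= sabs lam.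
Hypothesis Heig : L (u0 +v h) = lam *v (u0 +v h).

Let u := u0 +v h.
Definition M x := sinv lam *v L x.
Definition Mn n x := Nat.iter n M x.
Definition rho x := x -v phi0 x *v u.
Definition D n x := rho (Mn n x).
Let beta := e / (nu * sabs lam).
Let U := nrm u.

Lemma lam_pos : 0 < sabs lam.
Proof. lra. Qed.
Lemma lam_neq0 : lam <> s0.
Proof. intros E0. pose proof lam_pos. rewrite E0, Habs_0 in H. lra. Qed.

Lemma phi_u : phi0 u = s1.
Proof. unfold u. rewrite phi_add, Hphiu, G0_phi by apply Hh. ring. Qed.

Lemma U_bound : U <= (1 + K) * nu.
Proof. apply u0h_norm; auto. Qed.

Lemma M_lin : is_linear M.
Proof. intros b x y. unfold M. rewrite HL, bscal_addr, <- !bscal_mul. f_equal. f_equal. ring. Qed.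

Lemma Mn_lin n : is_linear (Mn n).
Proof. induction n; intros b x y; simpl. reflexivity. unfold Mn in *. simpl. rewrite IHn. apply M_lin. Qed.

Lemma M_u : M u = u.
Proof. unfold M, u. rewrite Heig, <- bscal_mul. replace (smul (sinv lam) lam) with s1. apply bscal_1.
  field. apply lam_neq0. Qed.

Lemma Mn_u n : Mn n u = u.
Proof. induction n; simpl; auto. unfold Mn in *. simpl. rewrite IHn. apply M_u. Qed.

Lemma L_M x : L x = lam *v M x.
Proof. unfold M. rewrite <- bscal_mul, sinv_r by apply lam_neq0. symmetry. apply bscal_1. Qed.

Lemma rho_G0 x : G0 (rho x).
Proof. apply Hker. unfold rho. rewrite phi_sub, phi_scal, phi_u. ring. Qed.

Lemma rho_dec x : x = rho x +v phi0 x *v u.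
Proof. unfold rho. symmetry. apply vsub_add. Qed.

Lemma phi_bound_u x : sabs (phi0 x) * U <= tau / nu * U * nrm x.
Proof. pose proof (phi_bound' x). assert (0 <= U) by apply bnorm_nonneg. nra. Qed.

Lemma rho_bound x : nrm (rho x) <= (1 + tau / nu * U) * nrm x.
Proof. unfold rho. eapply Rle_trans. apply vnorm_sub_le. rewrite bnorm_scal.
  pose proof (phi_bound_u x). fold U. lra. Qed.

Lemma rhoM_bound y : G0 y -> nrm (rho (M y)) <= r * nrm y.
Proof. intros Hy. unfold rho, M. rewrite phi_scal, bscal_mul, <- vscal_sub, bnorm_scal, sabs_inv by apply lam_neq0.
  unfold u. rewrite bscal_addr, vsub_add_r'. fold (pi0 (L y)).
  assert (B: nrm (pi0 (L y) -v phi0 (L y) *v h) <= (1 - a + e * (1 + K)) * nrm y).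
  { eapply Rle_trans. apply vnorm_sub_le. rewrite bnorm_scal.
    pose proof (pi_L_G0_bound y Hy). rewrite phi_L_G0 by auto.
    pose proof (phiE_bound y). destruct Hh as [_ Hh2].
    assert (sabs (phi0 (E y)) * nrm h <= e * nrm y * K).
    { apply Rle_trans with (sabs (phi0 (E y)) * (K * nu)). apply Rmult_le_compat_l; [apply Habs_nonneg | exact Hh2].
      rewrite (Rmult_comm K), <- Rmult_assoc. apply Rmult_le_compat_r; auto. }
    lra. }
  pose proof lam_pos. assert (0 <= nrm (pi0 (L y) -v phi0 (L y) *v h)) by apply bnorm_nonneg.
  apply Rle_trans with (/ ell * ((1 - a + e * (1 + K)) * nrm y)).
  - apply Rmult_le_compat; auto. left; apply Rinv_0_lt_compat; auto. apply Rinv_le_contravar; auto.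
  - unfold r. right. unfold Rdiv. ring. Qed.

Lemma phiM_bound y : G0 y -> sabs (phi0 (M y)) <= beta * nrm y.
Proof. intros Hy. unfold M. rewrite phi_scal, Habs_mul, sabs_inv by apply lam_neq0. rewrite phi_L_G0 by auto.
  pose proof (phiE_bound y). pose proof lam_pos. unfold beta.
  apply (Rmult_le_reg_r (nu * sabs lam)). apply Rmult_lt_0_compat; auto.
  replace (/ sabs lam * sabs (phi0 (E y)) * (nu * sabs lam)) with (sabs (phi0 (E y)) * nu) by (field; lra).
  replace (e / (nu * sabs lam) * nrm y * (nu * sabs lam)) with (e * nrm y) by (field; unfold nu in *; lra).
  auto. Qed.

Lemma Mn_dec n x : Mn n x = D n x +v phi0 (Mn n x) *v u.
Proof. apply rho_dec. Qed.

Lemma Mn_S n x : Mn (Datatypes.S n) x = M (Mn n x).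
Proof. reflexivity. Qed.

Lemma phi_step n x : phi0 (Mn (Datatypes.S n) x) = sadd (phi0 (M (D n x))) (phi0 (Mn n x)).
Proof. rewrite Mn_S. rewrite (Mn_dec n x) at 1. rewrite (lin_add M M_lin), (lin_scal M M_lin), M_u.
  rewrite phi_add, phi_scal, phi_u. ring. Qed.

Lemma D_step n x : D (Datatypes.S n) x = rho (M (D n x)).
Proof. unfold D at 1. unfold rho at 1. rewrite phi_step. rewrite Mn_S, (Mn_dec n x) at 1.
  rewrite (lin_add M M_lin), (lin_scal M M_lin), M_u. rewrite bscal_addl.
  rewrite vadd_sub_cancel_r. reflexivity. Qed.

Lemma D_G0 n x : G0 (D n x).
Proof. apply rho_G0. Qed.

Lemma D_bound n x : nrm (D n x) <= r ^ n * nrm (rho x).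
Proof. induction n. simpl. unfold D, Mn. simpl. lra.
  rewrite D_step. eapply Rle_trans. apply rhoM_bound. apply D_G0.
  assert (0 <= r). { unfold r. apply Rmult_le_pos. assert (0 <= e*(1+K)) by (apply Rmult_le_pos; lra). lra. left. apply Rinv_0_lt_compat. lra. }
  simpl. rewrite Rmult_assoc. apply Rmult_le_compat_l; auto. Qed.

Lemma r_nonneg : 0 <= r.
Proof. unfold r. apply Rmult_le_pos. assert (0 <= e*(1+K)) by (apply Rmult_le_pos; lra). lra. left. apply Rinv_0_lt_compat. lra. Qed.

Lemma beta_nonneg : 0 <= beta.
Proof. unfold beta. pose proof lam_pos. apply Rmult_le_pos; auto. left. apply Rinv_0_lt_compat. apply Rmult_lt_0_compat; auto. Qed.

Lemma phi_diff n x : sabs (sadd (phi0 (Mn (Datatypes.S n) x)) (sopp (phi0 (Mn n x)))) <= beta * (r ^ n * nrm (rho x)).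
Proof. rewrite phi_step. replace (sadd (sadd (phi0 (M (D n x))) (phi0 (Mn n x))) (sopp (phi0 (Mn n x)))) with (phi0 (M (D n x))) by ring.
  eapply Rle_trans. apply phiM_bound. apply D_G0. apply Rmult_le_compat_l. apply beta_nonneg. apply D_bound. Qed.

Lemma phi_partial n x : sabs (sadd (phi0 (Mn n x)) (sopp (phi0 x))) <= beta * nrm (rho x) * (1 - r ^ n) / (1 - r).
Proof. induction n.
  - simpl. unfold Mn; simpl. replace (sadd (phi0 x) (sopp (phi0 x))) with s0 by ring. rewrite Habs_0.
    unfold Rdiv. rewrite Rminus_diag_eq by auto. lra.
  - replace (sadd (phi0 (Mn (Datatypes.S n) x)) (sopp (phi0 x))) with
      (sadd (sadd (phi0 (Mn (Datatypes.S n) x)) (sopp (phi0 (Mn n x)))) (sadd (phi0 (Mn n x)) (sopp (phi0 x)))) by ring.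
    eapply Rle_trans. apply Habs_tri. eapply Rle_trans. apply Rplus_le_compat. apply phi_diff. apply IHn.
    right. simpl. field. lra. Qed.

Lemma phi_partial' n x : sabs (sadd (phi0 (Mn n x)) (sopp (phi0 x))) <= beta * nrm (rho x) / (1 - r).
Proof. eapply Rle_trans. apply phi_partial. unfold Rdiv. apply Rmult_le_compat_r. left; apply Rinv_0_lt_compat; lra.
  pose proof (pow_le r n r_nonneg). assert (0 <= beta * nrm (rho x)) by (apply Rmult_le_pos; [apply beta_nonneg|apply bnorm_nonneg]).
  nra. Qed.

Lemma Mn_step n x : nrm (Mn (Datatypes.S n) x -v Mn n x) <= ((r + 1 + beta * U) * nrm (rho x)) * r ^ n.
Proof. rewrite (Mn_dec (Datatypes.S n) x), (Mn_dec n x) at 1. rewrite vsub_add_distr, <- vscal_subl.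
  eapply Rle_trans. apply bnorm_tri. rewrite bnorm_scal. eapply Rle_trans. apply Rplus_le_compat.
  apply vnorm_sub_le. apply Rmult_le_compat_r. apply bnorm_nonneg. apply phi_diff.
  pose proof (D_bound (Datatypes.S n) x). pose proof (D_bound n x). simpl in H. fold U.
  assert (0 <= nrm (rho x)) by apply bnorm_nonneg. pose proof r_nonneg. pose proof beta_nonneg.
  assert (0 <= U) by apply bnorm_nonneg. pose proof (pow_le r n r_nonneg). nra. Qed.

Definition Gs x := conv (fun n => Mn n x) 0v.

Lemma Q_exists x : exists l, conv (fun n => Mn n x) l.
Proof. apply (geo_conv _ ((r + 1 + beta * U) * nrm (rho x)) r).
  apply Rmult_le_pos. pose proof r_nonneg. pose proof beta_nonneg. assert (0 <= U) by apply bnorm_nonneg. nra.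
  apply bnorm_nonneg. split. apply r_nonneg. auto. intros n. apply Mn_step. Qed.

Lemma D_conv0 x : conv (fun n => D n x) 0v.
Proof. apply (conv_geo0 _ (nrm (rho x)) r). split; [apply r_nonneg|auto].
  intros n. cbv beta. rewrite (Rmult_comm (nrm (rho x))). apply (D_bound n x). Qed.

Lemma Q_span x l : conv (fun n => Mn n x) l -> l = phi0 l *v u.
Proof. intros H.
  assert (H2: conv (fun n => phi0 (Mn n x) *v u) (phi0 l *v u)).
  { apply (conv_lip (fun y => phi0 y *v u) (tau / nu * U)); auto.
    apply Rmult_le_pos. unfold nu. apply Rdiv_le_0_compat; auto. apply bnorm_nonneg.
    intros n. rewrite <- vscal_subl, bnorm_scal, <- phi_sub. apply phi_bound_u. }
  pose proof (conv_add _ _ _ _ (D_conv0 x) H2). rewrite vadd0l in H0.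
  apply (conv_unique (fun n => Mn n x)); auto. apply (conv_ext _ _ _ (fun n => eq_sym (Mn_dec n x))). exact H0. Qed.

Lemma Mn_0 n : Mn n 0v = 0v.
Proof. apply lin_0, Mn_lin. Qed.

Lemma Gs_0 : Gs 0v.
Proof. unfold Gs. apply (conv_ext (fun _ => 0v)). intros n. symmetry. apply Mn_0. apply conv_const. Qed.

Lemma Gs_comb b x y : Gs x -> Gs y -> Gs (b *v x +v y).
Proof. intros Hx Hy. unfold Gs in *. pose proof (conv_add _ _ _ _ (conv_scal b _ _ Hx) Hy).
  rewrite vscal0r, badd_0 in H. apply (conv_ext _ _ _ (fun n => eq_sym (Mn_lin n b x y))). exact H. Qed.

Lemma Mn_u_scal n b : Mn n (b *v u) = b *v u.
Proof. rewrite (lin_scal _ (Mn_lin n)), Mn_u. reflexivity. Qed.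

Let a1 := tau / nu.
Let b1 := 1 + a1 * U.
Let Cb := b1 + (a1 + beta * b1 / (1 - r)) * U.

Lemma a1_nonneg : 0 <= a1.
Proof. unfold a1. unfold nu. apply Rdiv_le_0_compat; auto. Qed.

Lemma Mn_unif n v : nrm (Mn n v) <= Cb * nrm v.
Proof. rewrite Mn_dec. eapply Rle_trans. apply bnorm_tri. rewrite bnorm_scal.
  pose proof (D_bound n v). pose proof (phi_partial' n v). pose proof (rho_bound v).
  pose proof (phi_bound' v). fold a1 in H2. fold U a1 in H1. fold b1 in H1.
  pose proof (sabs_lower (phi0 (Mn n v)) (sopp (phi0 v))). rewrite Habs_opp in H3.
  pose proof (pow_le r n r_nonneg). assert (r ^ n <= 1). { replace 1 with (1 ^ n) by apply pow1. apply pow_incr. pose proof r_nonneg. lra. }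
  assert (0 <= nrm (rho v)) by apply bnorm_nonneg. assert (0 <= nrm v) by apply bnorm_nonneg.
  assert (0 <= U) by apply bnorm_nonneg. pose proof beta_nonneg. pose proof a1_nonneg.
  assert (HD: nrm (D n v) <= b1 * nrm v) by nra.
  assert (Hrr: 0 < 1 - r) by lra.
  assert (Hph: sabs (phi0 (Mn n v)) <= a1 * nrm v + beta * b1 / (1 - r) * nrm v).
  { assert (beta * nrm (rho v) / (1 - r) <= beta * b1 / (1 - r) * nrm v).
    { unfold Rdiv. rewrite !Rmult_assoc. apply Rmult_le_compat_l; auto. rewrite (Rmult_comm (/ (1 - r))).
      rewrite <- Rmult_assoc. rewrite (Rmult_comm b1). apply Rmult_le_compat_r. left; apply Rinv_0_lt_compat; lra. lra. }
    lra. }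
  unfold Cb. fold U. assert (sabs (phi0 (Mn n v)) * U <= (a1 + beta * b1 / (1 - r)) * U * nrm v).
  { apply Rle_trans with ((a1 * nrm v + beta * b1 / (1 - r) * nrm v) * U). apply Rmult_le_compat_r; auto. right; ring. }
  nra. Qed.

Lemma Cb_nonneg : 0 <= Cb.
Proof. unfold Cb, b1. pose proof a1_nonneg. pose proof beta_nonneg. assert (0 <= U) by apply bnorm_nonneg.
  assert (0 < 1 - r) by lra. assert (0 <= beta * (1 + a1 * U) / (1 - r)).
  { apply Rdiv_le_0_compat; auto. apply Rmult_le_pos; nra. } nra. Qed.

Lemma Gs_closed : closed_set Gs.
Proof. intros s l Hs Hlim. apply conv_mk. intros eps Heps.
  destruct (conv_get _ _ Hlim (eps / 2 / (Cb + 1))) as [N1 HN1].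
  { pose proof Cb_nonneg. apply Rdiv_lt_0_compat; lra. }
  specialize (HN1 N1 ltac:(lia)).
  destruct (conv_get _ _ (Hs N1) (eps/2)) as [N2 HN2]; [lra|].
  exists N2. intros n Hn. specialize (HN2 n Hn). rewrite vsub0 in *.
  rewrite (vsub_vadd l (s N1)), (lin_add _ (Mn_lin n)).
  eapply Rle_lt_trans. apply bnorm_tri. pose proof (Mn_unif n (l -v s N1)).
  rewrite (vnorm_sub_sym l) in H. pose proof Cb_nonneg.
  assert (Cb * nrm (s N1 -v l) <= Cb * (eps / 2 / (Cb + 1))) by (apply Rmult_le_compat_l; lra).
  assert (Cb * (eps / 2 / (Cb + 1)) < eps / 2).
  { apply Rlt_le_trans with ((Cb + 1) * (eps / 2 / (Cb + 1))). apply Rmult_lt_compat_r.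
    apply Rdiv_lt_0_compat; lra. lra. right. field. lra. }
  lra. Qed.

Lemma Gs_L x : Gs x -> Gs (L x).
Proof. intros Hx. unfold Gs in *. rewrite L_M.
  apply (conv_ext (fun n => lam *v Mn (Datatypes.S n) x)).
  - intros n. rewrite (lin_scal _ (Mn_lin n)). f_equal. unfold Mn. rewrite Nat.iter_succ_r. reflexivity.
  - rewrite <- (vscal0r lam). apply conv_scal. apply (conv_shift (fun n => Mn n x)). auto. Qed.

Lemma Gs_phi x : Gs x -> sabs (phi0 x) <= beta * nrm (rho x) / (1 - r).
Proof. intros Hx. apply Rle_eps. intros eps Heps.
  destruct (conv_get _ _ Hx (eps / (a1 + 1))) as [N HN].
  { pose proof a1_nonneg. apply Rdiv_lt_0_compat; lra. }
  specialize (HN N ltac:(lia)). rewrite vsub0 in HN.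
  pose proof (phi_partial' N x). pose proof (phi_bound' (Mn N x)). fold a1 in H0.
  pose proof (sabs_lower (phi0 x) (sadd (phi0 (Mn N x)) (sopp (phi0 x)))).
  replace (sadd (phi0 x) (sadd (phi0 (Mn N x)) (sopp (phi0 x)))) with (phi0 (Mn N x)) in H1 by ring.
  pose proof a1_nonneg.
  assert (a1 * nrm (Mn N x) <= eps).
  { apply Rle_trans with ((a1 + 1) * (eps / (a1 + 1))). apply Rmult_le_compat; try lra. apply bnorm_nonneg.
    right. field. lra. }
  lra. Qed.

Lemma gap_one x : Gs x -> nrm (L x) <= sabs lam * (1 - dl) * nrm x.
Proof. intros Hx. pose proof (Gs_phi x Hx) as Hp.
  rewrite (rho_dec x) at 1. rewrite L_add, L_scal. unfold u. rewrite Heig. fold u.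
  set (y := rho x) in *. assert (Hy: G0 y) by apply rho_G0.
  assert (HLy: nrm (L y) <= (1 - a + e) * nrm y).
  { rewrite L_split. eapply Rle_trans. apply bnorm_tri. pose proof (Hcontr y Hy). pose proof (E_bound y).
    assert (c * nrm y <= e * nrm y) by (apply Rmult_le_compat_r; [apply bnorm_nonneg|lra]). lra. }
  pose proof lam_pos as Hlp. pose proof U_bound as HU. assert (HU0: 0 <= U) by apply bnorm_nonneg.
  assert (Hyn: 0 <= nrm y) by apply bnorm_nonneg. assert (Hrr: 0 < 1 - r) by lra.
  assert (Hs1: sabs lam * (sabs (phi0 x) * U) <= sp * nrm y).
  { apply Rle_trans with (sabs lam * (beta * nrm y / (1 - r) * U)).
    apply Rmult_le_compat_l; [lra|]. apply Rmult_le_compat_r; auto.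
    unfold beta, sp. unfold Rdiv.
    replace (sabs lam * (e * / (nu * sabs lam) * nrm y * / (1 - r) * U)) with (e * (U / nu) * nrm y * / (1 - r))
      by (field; unfold nu in *; lra).
    replace (e * (1 + K) * / (1 - r) * nrm y) with (e * (1 + K) * nrm y * / (1 - r)) by ring.
    apply Rmult_le_compat_r. left; apply Rinv_0_lt_compat; lra. apply Rmult_le_compat_r; auto.
    apply Rmult_le_compat_l; auto. apply (Rmult_le_reg_r nu). unfold nu; auto.
    replace (U / nu * nu) with U by (field; unfold nu in *; lra). auto. }
  assert (Hyx: nrm y <= nrm x + sabs (phi0 x) * U).
  { unfold y. unfold rho. eapply Rle_trans. apply vnorm_sub_le. rewrite bnorm_scal. fold U. lra. }
  assert (Hsp0: 0 <= sp). { unfold sp. apply Rdiv_le_0_compat; [apply Rmult_le_pos; lra|lra]. }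
  assert (Hyx2: nrm y * (ell - sp) <= ell * nrm x).
  { assert (sabs (phi0 x) * U <= sp / sabs lam * nrm y).
    { apply (Rmult_le_reg_l (sabs lam)); auto. replace (sabs lam * (sp / sabs lam * nrm y)) with (sp * nrm y) by (field; lra). auto. }
    assert (sp / sabs lam <= sp / ell). { unfold Rdiv. apply Rmult_le_compat_l; auto. apply Rinv_le_contravar; lra. }
    assert (sp / sabs lam * nrm y <= sp / ell * nrm y) by (apply Rmult_le_compat_r; auto).
    assert (nrm y <= nrm x + sp / ell * nrm y) by lra.
    apply (Rmult_le_compat_l ell) in H2; [|lra].
    replace (ell * (nrm x + sp / ell * nrm y)) with (ell * nrm x + sp * nrm y) in H2 by (field; lra). nra. }
  eapply Rle_trans. apply bnorm_tri. rewrite bnorm_scal, bnorm_scal. fold U.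
  assert (T0: (sp + 1 - a + e) * nrm y <= (1 - dl) * (ell - sp) * nrm y) by (apply Rmult_le_compat_r; auto).
  assert (T: nrm (L y) + sabs (phi0 x) * (sabs lam * U) <= (1 - dl) * (ell - sp) * nrm y).
  { replace (sabs (phi0 x) * (sabs lam * U)) with (sabs lam * (sabs (phi0 x) * U)) by ring. lra. }
  assert (T2: (1 - dl) * (ell - sp) * nrm y <= (1 - dl) * ell * nrm x).
  { rewrite Rmult_assoc, (Rmult_assoc (1 - dl)). apply Rmult_le_compat_l; lra. }
  assert (T3: (1 - dl) * ell * nrm x <= sabs lam * (1 - dl) * nrm x).
  { assert (0 <= nrm x) by apply bnorm_nonneg. rewrite (Rmult_comm (sabs lam)). apply Rmult_le_compat_r; auto.
    apply Rmult_le_compat_l; lra. }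
  lra. Qed.


Lemma Gs_scal b x : Gs x -> Gs (b *v x).
Proof. intros H. rewrite <- (badd_0 _ (b *v x)). apply Gs_comb; auto. apply Gs_0. Qed.
Lemma Gs_add x y : Gs x -> Gs y -> Gs (x +v y).
Proof. intros H1 H2. rewrite <- (vscal_s1 x). apply Gs_comb; auto. Qed.
Lemma Gs_sub x y : Gs x -> Gs y -> Gs (x -v y).
Proof. intros H1 H2. rewrite vsub_scal, badd_comm. apply Gs_comb; auto. Qed.

Lemma Gs_dec x : exists b g, Gs g /\ x = b *v u +v g.
Proof. destruct (Q_exists x) as [l Hq]. exists (phi0 l), (x -v phi0 l *v u). split.
  - assert (H0: conv (fun n => Mn n x -v phi0 l *v u) (l -v phi0 l *v u))
      by exact (conv_add _ _ _ _ Hq (conv_const (bopp (phi0 l *v u)))).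
    assert (El: l -v phi0 l *v u = 0v). { pose proof (Q_span x l Hq) as Ql. rewrite <- Ql. apply vsubv. }
    rewrite El in H0. unfold Gs. apply (conv_ext (fun n => Mn n x -v phi0 l *v u)); auto.
    intros n. rewrite (lin_sub _ (Mn_lin n)), Mn_u_scal. reflexivity.
  - rewrite badd_comm. symmetry. apply vsub_add. Qed.

Lemma Gs_triv b : Gs (b *v u) -> b *v u = 0v.
Proof. intros H. unfold Gs in H. apply (conv_unique (fun n => Mn n (b *v u))); auto.
  apply (conv_ext (fun _ => b *v u)). intros n. symmetry. apply Mn_u_scal. apply conv_const. Qed.

Lemma gap_all n x : Gs x -> nrm (op_pow n L x) <= 1 * sabs lam ^ n * (1 - dl) ^ n * nrm x.
Proof. intros Hx. assert (HG: forall n, Gs (op_pow n L x)).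
  { induction n0; simpl; auto. apply Gs_L. auto. }
  induction n. simpl. lra.
  change (op_pow (Datatypes.S n) L x) with (L (op_pow n L x)).
  eapply Rle_trans. apply gap_one. apply HG.
  pose proof lam_pos. assert (0 <= sabs lam * (1 - dl)) by (apply Rmult_le_pos; lra).
  apply Rle_trans with (sabs lam * (1 - dl) * (1 * sabs lam ^ n * (1 - dl) ^ n * nrm x)).
  apply Rmult_le_compat_l; auto. right. simpl. ring. Qed.

Lemma vsub_swap x y z w : (x -v y) -v (z -v w) = (x -v z) -v (y -v w).
Proof. rewrite !vsub_scal, !bscal_addr. apply vadd_swap. Qed.

Definition RS g x := Gs x /\ L x -v lam *v x = g.

Lemma RS_exists g : Gs g -> exists x, RS g x.
Proof. intros Hg. pose proof lam_pos.
  destruct (fixed_point Gs (fun x => M x -v sinv lam *v g) (1 - dl) 0v Gs_closed Gs_0) as [x [Hx Hfix]].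
  - intros x Hx. apply Gs_sub. unfold M. apply Gs_scal, Gs_L; auto. apply Gs_scal; auto.
  - lra.
  - intros x y Hx Hy. cbv beta. rewrite vsub_sub_r, <- (lin_sub _ M_lin). unfold M.
    rewrite bnorm_scal, sabs_inv by apply lam_neq0. eapply Rle_trans.
    apply Rmult_le_compat_l. left; apply Rinv_0_lt_compat; auto. apply gap_one. apply Gs_sub; auto.
    right. field. lra.
  - exists x. split; auto. cbv beta in Hfix.
    assert (HM: M x = x +v sinv lam *v g). { rewrite <- Hfix at 2. symmetry. apply vsub_add. }
    rewrite L_M, HM, bscal_addr, <- bscal_mul, sinv_r by apply lam_neq0. rewrite vscal_s1.
    apply vadd_sub_l. Qed.

Lemma RS_unique g x1 x2 : RS g x1 -> RS g x2 -> x1 = x2.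
Proof. intros [H1 E1] [H2 E2]. apply vsub_eq0. set (d := x1 -v x2).
  assert (Hd: Gs d) by (apply Gs_sub; auto).
  assert (HLd: L d = lam *v d).
  { apply vsub_eq0. unfold d. rewrite L_sub, vscal_sub, vsub_swap, E1, E2. apply vsubv. }
  pose proof (gap_one d Hd). rewrite HLd, bnorm_scal in H. pose proof lam_pos.
  apply bnorm_eq0. pose proof (bnorm_nonneg _ d). 
  assert (sabs lam * dl * nrm d <= 0) by nra. 
  assert (0 < sabs lam * dl) by (apply Rmult_lt_0_compat; lra). nra. Qed.

Definition Rinv_op g := ClassicalEpsilon.epsilon (inhabits 0v) (RS g).

Lemma Rinv_spec g : Gs g -> RS g (Rinv_op g).
Proof. intros Hg. unfold Rinv_op. apply ClassicalEpsilon.epsilon_spec. apply RS_exists; auto. Qed.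

Lemma Rinv_bound g : Gs g -> nrm (Rinv_op g) <= / (dl * ell) * nrm g.
Proof. intros Hg. destruct (Rinv_spec g Hg) as [Hx Ex]. set (x := Rinv_op g) in *.
  assert (HL': L x = g +v lam *v x). { rewrite <- Ex. symmetry. apply vsub_add. }
  pose proof (gap_one x Hx). rewrite HL' in H. pose proof (vnorm_rev_add (lam *v x) g).
  rewrite badd_comm, bnorm_scal in H0. pose proof lam_pos. pose proof (bnorm_nonneg _ x).
  assert (sabs lam * dl * nrm x <= nrm g) by nra.
  assert (ell * dl * nrm x <= sabs lam * dl * nrm x).
  { apply Rmult_le_compat_r; auto. apply Rmult_le_compat_r; lra. }
  apply (Rmult_le_reg_l (dl * ell)). apply Rmult_lt_0_compat; lra.
  replace (dl * ell * (/ (dl * ell) * nrm g)) with (nrm g) by (field; lra). nra. Qed.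

Lemma eig_result : simple_isolated_eigen L lam u Gs /\ spectral_gap L lam Gs dl 1.
Proof. split.
  - split; [|split; [|split; [|split]]].
    + intros E0. pose proof phi_u. rewrite E0, phi_0 in H. apply s1_neq0. auto.
    + exact Heig.
    + split; [|split].
      * split; [apply Gs_0|split]. intros b x y; apply Gs_comb. intros s0' l Hs Hl'. apply (Gs_closed s0' l Hs Hl').
      * apply Gs_dec.
      * apply Gs_triv.
    + intros x Hx. apply Gs_L; auto.
    + exists Rinv_op. split; [|split].
      * intros g Hg. apply (Rinv_spec g Hg).
      * intros g Hg. split.
        -- apply (RS_unique (L g -v lam *v g)). apply Rinv_spec. apply Gs_sub. apply Gs_L; auto. apply Gs_scal; auto.
           split; auto.
        -- apply Rinv_spec; auto.
      * exists (/ (dl * ell)). intros g Hg. apply Rinv_bound; auto.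
  - intros x n Hx. apply gap_all; auto. Qed.

End Eig.


Lemma main_result : exists lam u G, simple_isolated_eigen L lam u G /\ spectral_gap L lam G dl 1.
Proof. destruct eigen_exists as [h [Hh Heig]]. exists (Lam h), (u0 +v h), (Gs (Lam h)).
  apply eig_result; auto. apply Lam_bound; auto. Qed.

End Main.

Lemma opnorm_nonneg (T : X -> X) cc : is_linear T -> is_opnorm T cc -> 0 <= cc.
Proof. intros HT [Hub _]. apply Hub. exists 0v. split. rewrite vnorm0; lra. rewrite (lin_0 T HT), vnorm0. reflexivity. Qed.

Lemma opnorm_bound (T : X -> X) cc : is_linear T -> is_opnorm T cc -> forall x, nrm (T x) <= cc * nrm x.
Proof. intros HT Hop x. pose proof (opnorm_nonneg T cc HT Hop) as Hc0. destruct Hop as [Hub _].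
  destruct (Req_dec (nrm x) 0) as [Z|NZ].
  - apply bnorm_eq0 in Z. subst x. rewrite (lin_0 T HT), vnorm0. lra.
  - assert (Hx: 0 < nrm x) by (pose proof (bnorm_nonneg _ x); lra).
    destruct (Habs_real (/ nrm x)) as [k Hk]. left; apply Rinv_0_lt_compat; auto.
    assert (H1: nrm (T (k *v x)) <= cc). { apply Hub. exists (k *v x). split; auto.
      rewrite bnorm_scal, Hk, Rinv_l; lra. }
    rewrite (lin_scal T HT), bnorm_scal, Hk in H1.
    apply (Rmult_le_reg_l (/ nrm x)). apply Rinv_0_lt_compat; auto.
    replace (/ nrm x * (cc * nrm x)) with cc by (field; lra). auto. Qed.

Lemma corollary_gen
  (dim2 : exists x y : X, forall a b : S,
      badd (bscal a x) (bscal b y) = bzero X -> a = s0 /\ b = s0)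
  (L0 : X -> X) (hL0 : is_bounded L0)
  (u0 : X) (G0 : X -> Prop) (phi0 : X -> S)
  (hsimple : simple_isolated_eigen L0 s1 u0 G0)
  (hphi : eigenform L0 s1 u0 G0 phi0)
  (delta0 : R) (hd0 : 0 < delta0 < 1)
  (hcontr : forall x, G0 x -> bnorm (L0 x) <= (1 - delta0) * bnorm x)
  (tau0 pinorm0 : R)
  (htau : is_opnorm (eig_proj phi0 u0) tau0)
  (hpi : is_opnorm (eig_coproj phi0 u0) pinorm0) :
  (forall delta : R, 0 < delta < delta0 ->
     forall L : X -> X, is_bounded L ->
     forall c : R, is_opnorm (op_sub L L0) c ->
     c <= delta0 * (delta0 - delta) / (6 * (1 + delta0 - delta) * tau0 * pinorm0) ->
     exists (lam : S) (u : X) (G : X -> Prop),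
       simple_isolated_eigen L lam u G /\ spectral_gap L lam G delta 1)
  /\
  (forall L : X -> X, is_bounded L ->
     forall c : R, is_opnorm (op_sub L L0) c ->
     c < delta0 ^ 2 / (6 * (1 + delta0) * tau0 * pinorm0) ->
     exists delta : R, 0 < delta < 1 /\
     exists (lam : S) (u : X) (G : X -> Prop),
       simple_isolated_eigen L lam u G /\ spectral_gap L lam G delta 1).
Proof.
  destruct hL0 as [HL0 _].
  destruct hsimple as [Hu0 [HL0u [[HG0 [Hdec Htriv]] [Hinv _]]]].
  destruct hphi as [Hphi [HphiL [Hker Hphiu]]].
  assert (HphiL' : forall x, phi0 (L0 x) = phi0 x) by (intros x; rewrite HphiL; ring).
  rewrite vscal_s1 in HL0u.
  assert (HPlin : is_linear (eig_proj phi0 u0)).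
  { intros b x y. unfold eig_proj. rewrite Hphi, bscal_addl, bscal_mul. reflexivity. }
  assert (Hpilin : is_linear (eig_coproj phi0 u0)).
  { intros b x y. unfold eig_coproj, eig_proj. rewrite Hphi, bscal_addl, bscal_mul, vsub_add_distr, vscal_sub.
    reflexivity. }
  assert (Htau : forall x, nrm ((phi0 x) *v u0) <= tau0 * nrm x) by (apply (opnorm_bound _ _ HPlin htau)).
  assert (Hpi : forall x, nrm (x -v (phi0 x) *v u0) <= pinorm0 * nrm x) by (apply (opnorm_bound _ _ Hpilin hpi)).
  assert (Hnu : 0 < nrm u0).
  { pose proof (bnorm_nonneg _ u0). destruct H; auto. exfalso. apply Hu0, bnorm_eq0; auto. }
  assert (Htau1 : 1 <= tau0).
  { pose proof (Htau u0). rewrite Hphiu, vscal_s1 in H. apply (Rmult_le_reg_r (nrm u0)); auto. lra. }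
  assert (Hp1 : 1 <= pinorm0).
  { destruct dim2 as [x [y Hxy]].
    assert (Hg: exists g, G0 g /\ g <> 0v).
    { destruct (classic (x -v phi0 x *v u0 = 0v)) as [Ex|Ex].
      - destruct (classic (y -v phi0 y *v u0 = 0v)) as [Ey|Ey].
        + apply vsub_eq0 in Ex. apply vsub_eq0 in Ey. exfalso.
          remember (phi0 x) as ax. remember (phi0 y) as ay.
          assert (Z: ay *v x +v (sopp ax) *v y = 0v).
          { rewrite Ex at 1. rewrite Ey at 1. rewrite <- !bscal_mul, <- bscal_addl.
            replace (sadd (smul ay ax) (smul (sopp ax) ay)) with s0 by ring.
            apply vscal0. }
          destruct (Hxy _ _ Z) as [Z1 Z2].
          assert (Z3: ax = s0). { replace ax with (sopp (sopp ax)) by ring. rewrite Z2. ring. }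
          rewrite Z3, vscal0 in Ex. destruct (Hxy s1 s0) as [Z4 _]. rewrite Ex, vscal0r, vscal0, badd_0. reflexivity.
          apply s1_neq0; auto.
        + exists (y -v phi0 y *v u0). split; auto. apply Hker. rewrite (flin_sub _ Hphi), (flin_scal _ Hphi), Hphiu. ring.
      - exists (x -v phi0 x *v u0). split; auto. apply Hker. rewrite (flin_sub _ Hphi), (flin_scal _ Hphi), Hphiu. ring. }
    destruct Hg as [g [Hg Hg0]]. pose proof (Hpi g). rewrite (proj2 (Hker g) Hg), vscal0, vsub0 in H.
    assert (0 < nrm g). { pose proof (bnorm_nonneg _ g). destruct H0; auto. exfalso. apply Hg0, bnorm_eq0; auto. }
    apply (Rmult_le_reg_r (nrm g)); auto. lra. }
  assert (Part1 : forall delta : R, 0 < delta < delta0 ->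
     forall L : X -> X, is_bounded L ->
     forall c : R, is_opnorm (op_sub L L0) c ->
     c <= delta0 * (delta0 - delta) / (6 * (1 + delta0 - delta) * tau0 * pinorm0) ->
     exists (lam : S) (u : X) (G : X -> Prop),
       simple_isolated_eigen L lam u G /\ spectral_gap L lam G delta 1).
  { intros delta Hd L [HL _] c Hcop Hcb.
    assert (HElin : is_linear (op_sub L L0)).
    { intros b x y. unfold op_sub. rewrite HL, HL0. rewrite vsub_add_distr, vscal_sub. reflexivity. }
    pose proof (opnorm_bound _ _ HElin Hcop) as HE. pose proof (opnorm_nonneg _ _ HElin Hcop) as Hc0.
    destruct (numerics delta0 delta Hd (proj2 hd0)) as [He0 [HK0 [Hl [Hinvb [Hr [Hf1 Hf2]]]]]].
    set (e := delta0 * (delta0 - delta) / (6 * (1 + (delta0 - delta)))) in *.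
    assert (Htpc: tau0 * pinorm0 * c <= e).
    { assert (E1: delta0 * (delta0 - delta) / (6 * (1 + delta0 - delta) * tau0 * pinorm0) = e / (tau0 * pinorm0))
        by (unfold e; field; repeat split; lra).
      rewrite E1 in Hcb. apply (Rmult_le_compat_l (tau0 * pinorm0)) in Hcb; [|nra].
      replace (tau0 * pinorm0 * (e / (tau0 * pinorm0))) with e in Hcb by (field; split; lra). lra. }
    eapply (main_result L0 L u0 G0 phi0 HL0 HL HG0 Hphi HphiL' Hker Hphiu HL0u delta0 delta tau0 pinorm0 c e (2 * e / delta0)); auto; try lra.
    all: assert (0 <= tau0 * c) by nra; assert (0 <= pinorm0 * c) by nra;
         assert (tau0 * c <= tau0 * pinorm0 * c) by (rewrite (Rmult_comm tau0 pinorm0), Rmult_assoc; nra);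
         assert (pinorm0 * c <= tau0 * pinorm0 * c) by (rewrite Rmult_assoc; nra);
         assert (c <= pinorm0 * c) by nra; lra. }
  split; auto.
  intros L HLb c Hcop Hcb.
  assert (HElin : is_linear (op_sub L L0)).
  { destruct HLb as [HL _]. intros b x y. unfold op_sub. rewrite HL, HL0. rewrite vsub_add_distr, vscal_sub. reflexivity. }
  pose proof (opnorm_nonneg _ _ HElin Hcop) as Hc0.
  set (a := delta0) in *. set (m := 6 * c * tau0 * pinorm0).
  assert (Hm0: 0 <= m) by (unfold m; repeat apply Rmult_le_pos; lra).
  assert (Hm: m * (1 + a) < a ^ 2).
  { assert (E1: a ^ 2 / (6 * (1 + a) * tau0 * pinorm0) * (6 * (1 + a) * tau0 * pinorm0) = a ^ 2)
      by (field; repeat split; lra).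
    assert (0 < 6 * (1 + a) * tau0 * pinorm0) by (repeat apply Rmult_lt_0_compat; lra).
    apply (Rmult_lt_compat_r (6 * (1 + a) * tau0 * pinorm0)) in Hcb; auto. rewrite E1 in Hcb.
    unfold m. nra. }
  assert (Ham: 0 < a - m) by nra.
  set (t := (m / (a - m) + a) / 2).
  assert (Ht1: m / (a - m) < a). { apply (Rmult_lt_reg_r (a - m)); auto. unfold Rdiv. rewrite Rmult_assoc, Rinv_l by lra. nra. }
  assert (Ht0: 0 <= m / (a - m)) by (apply Rdiv_le_0_compat; lra).
  assert (Ht2: m / (a - m) < t < a) by (unfold t; lra).
  exists (a - t). split. lra.
  refine (Part1 (a - t) _ L HLb c Hcop _). lra.
  replace (a - (a - t)) with t by ring.
  assert (Hmt: m <= t * (a - m)).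
  { apply Rle_trans with (m / (a - m) * (a - m)). right; field; lra. apply Rmult_le_compat_r; lra. }
  apply (Rmult_le_reg_r (6 * (1 + t) * tau0 * pinorm0)). repeat apply Rmult_lt_0_compat; lra.
  replace (a * t / (6 * (1 + a - (a - t)) * tau0 * pinorm0) * (6 * (1 + t) * tau0 * pinorm0)) with (a * t)
    by (field; repeat split; lra).
  unfold m in Hmt. nra. Qed.

End Scal.
From Coquelicot Require Complex.

Lemma R_abs_eq0 (a : R) : Rabs a = 0 -> a = 0.
Proof. intros H. destruct (Req_dec a 0); auto. exfalso. apply Rabs_no_R0 in H0. auto. Qed.

Lemma C_abs_real (r : R) : 0 <= r -> exists k : Complex.C, Complex.Cmod k = r.
Proof. intros H. exists (Complex.RtoC r). rewrite Complex.Cmod_R. apply Rabs_pos_eq; auto. Qed.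

Theorem corollaryD (F : ScalarField) (X : Banach (scalars_of F))
  (dim2 : exists x y : X, forall a b : sc_car (scalars_of F),
      badd (bscal a x) (bscal b y) = bzero X ->
      a = sc0 (scalars_of F) /\ b = sc0 (scalars_of F))
  (L0 : X -> X) (hL0 : is_bounded L0)
  (u0 : X) (G0 : X -> Prop) (phi0 : X -> sc_car (scalars_of F))
  (hsimple : simple_isolated_eigen L0 (sc1 (scalars_of F)) u0 G0)
  (hphi : eigenform L0 (sc1 (scalars_of F)) u0 G0 phi0)
  (hnorm : is_opnorm L0 1)
  (delta0 : R) (hd0 : 0 < delta0 < 1)
  (hcontr : forall x, G0 x -> bnorm (L0 x) <= (1 - delta0) * bnorm x)
  (tau0 pinorm0 : R)
  (htau : is_opnorm (eig_proj phi0 u0) tau0)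
  (hpi : is_opnorm (eig_coproj phi0 u0) pinorm0) :
  (forall delta : R, 0 < delta < delta0 ->
     forall L : X -> X, is_bounded L ->
     forall c : R, is_opnorm (op_sub L L0) c ->
     c <= delta0 * (delta0 - delta) / (6 * (1 + delta0 - delta) * tau0 * pinorm0) ->
     exists (lam : sc_car (scalars_of F)) (u : X) (G : X -> Prop),
       simple_isolated_eigen L lam u G /\ spectral_gap L lam G delta 1)
  /\
  (forall L : X -> X, is_bounded L ->
     forall c : R, is_opnorm (op_sub L L0) c ->
     c < delta0 ^ 2 / (6 * (1 + delta0) * tau0 * pinorm0) ->
     exists delta : R, 0 < delta < 1 /\
     exists (lam : sc_car (scalars_of F)) (u : X) (G : X -> Prop),
       simple_isolated_eigen L lam u G /\ spectral_gap L lam G delta 1).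
Proof.
  destruct F.
  - exact (corollary_gen RScalars Rinv Rfield Rabs_mult Rabs_triang Rabs_Ropp Rabs_R0 Rabs_R1
      R_abs_eq0 Rabs_pos (fun r H => ex_intro _ r (Rabs_pos_eq r H))
      X dim2 L0 hL0 u0 G0 phi0 hsimple hphi delta0 hd0 hcontr tau0 pinorm0 htau hpi).
  - exact (corollary_gen CScalars Complex.Cinv Complex.C_field_theory Complex.Cmod_mult Complex.Cmod_triangle
      Complex.Cmod_opp Complex.Cmod_0 Complex.Cmod_1 Complex.Cmod_eq_0 Complex.Cmod_ge_0 C_abs_real
      X dim2 L0 hL0 u0 G0 phi0 hsimple hphi delta0 hd0 hcontr tau0 pinorm0 htau hpi).
Qed.
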